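(* Let $\bar u\in L^\infty(\Omega)\cap U_{ad}$ be a local solution of the problem $\min_{u\in U_{ad}} f(u)+g(u)$ with respect to the $L^p(\Omega)$-topology for some $1\le p<\infty$ (i.e. $f(\bar u)+g(\bar u)\le f(u)+g(u)$ for all $u\in U_{ad}$ with $\|u-\bar u\|_{L^p(\Omega)}$ sufficiently small). Assume that $$f(u)-f(\bar u)=\int_\Omega \nabla f(\bar u)(u-\bar u)\,dx+o(\|u-\bar u\|_{L^1(\Omega)})\quad\text{as }\|u-\bar u\|_{L^1(\Omega)}\to0,\ u\in U_{ad}.$$ Then for almost every $x\in\Omega$, $$\bar u(x)\in\operatorname*{arg\,min}_{v\in\mathbb R,\ |v|\le b}\Big(\nabla f(\bar u)(x)\, v+\frac\alpha2 v^2+\beta|v|_0\Big).$$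
   Context: Let $\Omega\subset\mathbb R^n$ be a bounded open set with Lebesgue measure. Fix $\alpha\ge0$, $\beta>0$, $b\in(0,+\infty]$ and set $U_{ad}:=\{v\in L^2(\Omega): |v(x)|\le b\text{ a.e. in }\Omega\}$. For $t\in\mathbb R$ let $|t|_0:=0$ if $t=0$ and $|t|_0:=1$ if $t\ne0$; for measurable $u$ let $\|u\|_0:=\operatorname{meas}\{x\in\Omega:u(x)\ne0\}$. Define $g(u):=\frac\alpha2\|u\|_{L^2(\Omega)}^2+\beta\|u\|_0$. The function $f:L^2(\Omega)\to\mathbb R$ is Fréchet differentiable, and $\nabla f(u)\in L^2(\Omega)$ denotes the Riesz representative of its derivative, i.e. $f'(u)h=\int_\Omega\nabla f(u)h\,dx$. *)

(* Defs.v *)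
From HB Require Import structures.
From mathcomp Require Import all_boot all_order all_algebra.
From mathcomp Require Import all_classical all_reals all_analysis.
Set Implicit Arguments. Unset Strict Implicit. Unset Printing Implicit Defensive.
Import Order.TTheory GRing.Theory Num.Theory.
Local Open Scope classical_set_scope.
Local Open Scope ring_scope.

(* R^n is modelled as n.-tuple R, with the product (= Borel) sigma-algebra. *)

Definition box {R : realType} {n : nat} (a b : n.-tuple R) : set (n.-tuple R) :=
  [set x | forall i : 'I_n, tnth a i <= tnth x i <= tnth b i].

(* mu is the Lebesgue measure on (the Borel sets of) R^n: it gives every box
   its volume (this determines mu uniquely on the Borel sigma-algebra). *)
Definition is_lebesgue_measure {R : realType} {n : nat}
  (mu : set (n.-tuple R) -> \bar R) : Prop :=
  forall a b : n.-tuple R, (forall i : 'I_n, tnth a i <= tnth b i) ->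
    mu (box a b) = (\prod_(i < n) (tnth b i - tnth a i))%:E.

(* open subset of R^n (sup-norm balls; equivalent to Euclidean topology) *)
Definition open_Rn {R : realType} {n : nat} (O : set (n.-tuple R)) : Prop :=
  forall x, O x -> exists2 e : R, 0 < e &
    forall y : n.-tuple R, (forall i : 'I_n, `|tnth y i - tnth x i| < e) -> O y.

Definition bounded_Rn {R : realType} {n : nat} (O : set (n.-tuple R)) : Prop :=
  exists M : R, forall x, O x -> forall i : 'I_n, `|tnth x i| <= M.

Definition abs0 {R : realType} (t : R) : R := if t == 0 then 0 else 1.

Definition inL2 {R : realType} {n : nat} (mu : {measure set (n.-tuple R) -> \bar R})
  (Om : set (n.-tuple R)) (u : n.-tuple R -> R) : Prop :=
  measurable_fun Om u /\ (\int[mu]_(x in Om) ((u x) ^+ 2)%:E < +oo)%E.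

Definition inLinf {R : realType} {n : nat} (mu : {measure set (n.-tuple R) -> \bar R})
  (Om : set (n.-tuple R)) (u : n.-tuple R -> R) : Prop :=
  measurable_fun Om u /\ exists M : R, {ae mu, forall x, Om x -> `|u x| <= M}.

Definition Uad {R : realType} {n : nat} (mu : {measure set (n.-tuple R) -> \bar R})
  (Om : set (n.-tuple R)) (b : \bar R) (u : n.-tuple R -> R) : Prop :=
  inL2 mu Om u /\ {ae mu, forall x, Om x -> (`|u x|%:E <= b)%E}.

Definition LpnormOm {R : realType} {n : nat} (mu : {measure set (n.-tuple R) -> \bar R})
  (Om : set (n.-tuple R)) (p : R) (u : n.-tuple R -> R) : \bar R :=
  Lnorm mu p%:E (fun x => if `[< Om x >] then (u x)%:E else 0%E).

Definition l0norm {R : realType} {n : nat} (mu : {measure set (n.-tuple R) -> \bar R})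
  (Om : set (n.-tuple R)) (u : n.-tuple R -> R) : \bar R :=
  mu [set x | Om x /\ u x != 0].

Definition gfun {R : realType} {n : nat} (mu : {measure set (n.-tuple R) -> \bar R})
  (Om : set (n.-tuple R)) (alpha beta : R) (u : n.-tuple R -> R) : \bar R :=
  ((alpha / 2)%:E * \int[mu]_(x in Om) ((u x) ^+ 2)%:E + beta%:E * l0norm mu Om u)%E.

Definition frechet_L2 {R : realType} {n : nat} (mu : {measure set (n.-tuple R) -> \bar R})
  (Om : set (n.-tuple R)) (f : (n.-tuple R -> R) -> R)
  (gradf : (n.-tuple R -> R) -> n.-tuple R -> R) : Prop :=
  forall u, inL2 mu Om u ->
    inL2 mu Om (gradf u) /\
    forall eps : R, 0 < eps -> exists2 delta : R, 0 < delta &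
      forall h, inL2 mu Om h -> (LpnormOm mu Om 2 h < delta%:E)%E ->
        (`| (f (u \+ h) - f u)%:E - \int[mu]_(x in Om) (gradf u x * h x)%:E |
           <= eps%:E * LpnormOm mu Om 2 h)%E.

Definition is_argmin {R : realType} (S : set R) (F : R -> R) (v0 : R) : Prop :=
  S v0 /\ forall v, S v -> F v0 <= F v.

(* Main.v *)
Require Import Defs.
From HB Require Import structures.
From mathcomp Require Import all_boot all_order all_algebra.
From mathcomp Require Import all_classical all_reals all_analysis.
From mathcomp Require Import ring lra.
From mathcomp Require Import measurable_realfun.
Import Order.TTheory GRing.Theory Num.Theory.
Local Open Scope classical_set_scope.
Local Open Scope ring_scope.

Lemma int_restr {d} {T : measurableType d} {R : realType} (mu : {measure set T -> \bar R})
  {D S : set T} {h : T -> \bar R} : S `<=` D ->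
  (forall x, D x -> ~ S x -> h x = 0%E) ->
  (\int[mu]_(x in D) h x = \int[mu]_(x in S) h x)%E.
Proof.
move=> SD h0; rewrite integral_mkcond [RHS]integral_mkcond.
apply: eq_integral => x _; rewrite !patchE.
case: (boolP (x \in S)) => xS.
  by rewrite (_ : x \in D) //; apply/mem_set/SD/set_mem.
case: (boolP (x \in D)) => xD //.
by apply: h0; [exact: set_mem | move=> /mem_set; rewrite (negbTE xS)].
Qed.

Lemma box_meas (R : realType) (n : nat) (a b : n.-tuple R) :
  measurable (box a b).
Proof.
have -> : box a b = \bigcap_(i in [set: 'I_n])
   ([set: n.-tuple R] `&` (fun x => tnth x i) @^-1` [set` `[tnth a i, tnth b i]]).
  apply/seteqP; split => x /=.
    by move=> H i _; split => //=; rewrite in_itv /= H.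
  by move=> H i; have [_ /=] := H i I; rewrite in_itv.
apply: fin_bigcap_measurable; first exact: finite_finset.
move=> i _; apply: measurable_tnth => //; exact: measurable_itv.
Qed.

Lemma cover_nat (R : realType) (h y : R) : 0 < h -> 0 <= y ->
  exists k : nat, k%:R * h <= y <= k.+1%:R * h.
Proof.
move=> h0 y0.
have [N yN] : exists N : nat, y <= N%:R * h.
  exists (Num.Def.archi_bound (y / h)).
  rewrite -ler_pdivrMr //; apply: ltW; apply: archi_boundP.
  exact: divr_ge0 (ltW h0).
elim: N yN => [|N IH] yN.
  exists 0%N; rewrite mul0r mul1r; apply/andP; split => //.
  by apply: le_trans (ltW h0); rewrite mul0r in yN.
case: (leP y (N%:R * h)) => [/IH //|Ny].
by exists N; rewrite yN (ltW Ny).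
Qed.

Lemma box_prod (R : realType) (n : nat) (A c w : R) (A0 : 0 <= A) (w0 : 0 <= w)
  (mu : {measure set (n.+1.-tuple R) -> \bar R}) (mu_leb : is_lebesgue_measure mu) :
  mu (box [tuple of mktuple (fun i : 'I_n.+1 => if i == ord0 then c else - A)]
          [tuple of mktuple (fun i : 'I_n.+1 => if i == ord0 then c + w else A)])
  = (w * (A + A) ^+ n)%:E.
Proof.
rewrite mu_leb.
  congr EFin; rewrite big_ord_recl !tnth_mktuple eqxx; congr (_ * _).
    by rewrite addrAC subrr add0r.
  rewrite (eq_bigr (fun _ => A + A)); last first.
    move=> i _; rewrite !tnth_mktuple.
    have -> : (lift ord0 i == ord0) = false by rewrite eq_sym; apply/negbTE/neq_lift.
    by rewrite opprK.
  by rewrite prodr_const card_ord.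
move=> i; rewrite !tnth_mktuple; case: ifP => _.
  by rewrite lerDl.
by rewrite -subr_ge0 opprK addr_ge0.
Qed.

Lemma bdd_in_box {R : realType} {n : nat} {Om : set (n.+1.-tuple R)}
  (Om_bdd : bounded_Rn Om) : exists2 A : R, 0 < A & forall x, Om x -> forall i, `|tnth x i| <= A.
Proof.
case: Om_bdd => M HM; exists (`|M| + 1); first by rewrite ltr_wpDl.
move=> x Ox i; apply: le_trans (HM x Ox i) _.
by apply: le_trans (ler_norm M) _; rewrite lerDl.
Qed.

Lemma Om_fin (R : realType) (n : nat) (mu : {measure set (n.+1.-tuple R) -> \bar R})
  (mu_leb : is_lebesgue_measure mu) (Om : set (n.+1.-tuple R))
  (Om_bdd : bounded_Rn Om) (Om_meas : measurable Om) : (mu Om < +oo)%E.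
Proof.
have [A A0 HA] := bdd_in_box Om_bdd.
pose B := box [tuple of mktuple (fun i : 'I_n.+1 => if i == ord0 then - A else - A)]
          [tuple of mktuple (fun i : 'I_n.+1 => if i == ord0 then - A + (A + A) else A)].
have sub : Om `<=` B.
  move=> x Ox i; rewrite !tnth_mktuple; have := HA x Ox i; rewrite ler_norml.
  by case: ifP => _ //; rewrite addrA addNr add0r.
have Hle : (mu Om <= mu B)%E.
  by apply: le_measure => //; apply: mem_set => //; exact: box_meas.
apply: le_lt_trans Hle _.
have w0 : 0 <= A + A by rewrite addr_ge0 // ltW.
by rewrite /B (@box_prod _ _ A (-A) (A+A) (ltW A0) w0 mu mu_leb) ltry.
Qed.

Lemma nonatomic (R : realType) (n : nat) (mu : {measure set (n.+1.-tuple R) -> \bar R})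
  (mu_leb : is_lebesgue_measure mu) (Om : set (n.+1.-tuple R))
  (Om_bdd : bounded_Rn Om) (E : set (n.+1.-tuple R)) (mE : measurable E)
  (EOm : E `<=` Om) (Epos : (0 < mu E)%E) (t : R) (t0 : 0 < t) :
  exists S, [/\ measurable S, S `<=` E, (0 < mu S)%E & (mu S < t%:E)%E].
Proof.
have [A A0 HA] := bdd_in_box Om_bdd.
set c := (A + A) ^+ n.+1.
have c0 : 0 <= c by rewrite exprn_ge0 // addr_ge0 // ltW.
pose N := Num.Def.archi_bound (c / t).
have hN : c / t < N%:R by apply: archi_boundP; exact: divr_ge0 (ltW t0).
pose h := (A + A) / N.+1%:R.
have h0 : 0 < h by rewrite divr_gt0 // addr_gt0.
pose J (k : nat) := box [tuple of mktuple (fun i : 'I_n.+1 => if i == ord0 then - A + k%:R * h else - A)]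
          [tuple of mktuple (fun i : 'I_n.+1 => if i == ord0 then (- A + k%:R * h) + h else A)].
have muJ k : (mu (J k) < t%:E)%E.
  rewrite /J (@box_prod _ _ A _ h (ltW A0) (ltW h0) mu mu_leb) lte_fin.
  have key : c / N.+1%:R < t.
    rewrite ltr_pdivrMr // mulrC -ltr_pdivrMr //.
    by apply: lt_le_trans hN _; rewrite ler_nat.
  by move: key; rewrite /c exprS /h mulrAC.
have mJ k : measurable (E `&` J k) by apply: measurableI => //; exact: box_meas.
have [k Hk] : exists k, (0 < mu (E `&` J k))%E.
  apply/not_existsP => H0.
  have H1 k : mu (E `&` J k) = 0%E.
    apply/eqP; rewrite eq_le measure_ge0 andbT leNgt; exact/negP/H0.
  have Hb : mu.-negligible (\bigcup_k (E `&` J k)).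
    apply: negligible_bigcup => k; apply/(negligibleP mu (mJ k)); exact: H1.
  have HE : mu.-negligible E.
    apply: (negligibleS _ Hb) => x Ex.
    have Ox := EOm x Ex.
    have [k /andP[k1 k2]] : exists k : nat, k%:R * h <= tnth x ord0 + A <= k.+1%:R * h.
      apply: cover_nat => //; rewrite -lerBlDr sub0r; have := HA x Ox ord0.
      by rewrite ler_norml => /andP[].
    exists k => //; split => // i; rewrite !tnth_mktuple.
    case: ifP => [/eqP -> | _].
      move: k1 k2; rewrite -natr1 mulrDl mul1r => k1 k2.
      by apply/andP; split; lra.
    by rewrite -ler_norml; exact: HA.
  have E0 := measure_negligible mE HE; by rewrite E0 ltxx in Epos.
exists (E `&` J k); split; [exact: mJ | exact: subIsetl | exact: Hk | ].
apply: le_lt_trans (muJ k).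
apply: le_measure; [exact: mem_set | apply: mem_set; exact: box_meas | exact: subIsetr].
Qed.

Lemma bint d (T : measurableType d) (R : realType) (mu : {measure set T -> \bar R})
  (D : set T) (h : T -> R) (c : R) : 0 <= c -> measurable D -> (mu D < +oo)%E ->
  measurable_fun D h -> (forall x, D x -> `|h x| <= c) ->
  mu.-integrable D (EFin \o h).
Proof.
move=> c0 mD Dfin mh hc; apply/integrableP; split; first exact/measurable_EFinP.
apply: (@le_lt_trans _ _ (\int[mu]_(x in D) (cst c%:E) x)%E);
  last by rewrite integral_cst // lte_mul_pinfty.
apply: ge0_le_integral => //.
  apply: measurableT_comp; [exact: abse_measurable | exact/measurable_EFinP].
all: try (move=> x Dx /=; rewrite lee_fin; exact: hc).
Qed.

Lemma zint d (T : measurableType d) (R : realType) (mu : {measure set T -> \bar R})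
  (D S : set T) (h : T -> R) (c : R) : 0 <= c -> measurable D -> measurable S ->
  S `<=` D -> (mu S < +oo)%E ->
  measurable_fun D h -> (forall x, D x -> ~ S x -> h x = 0) ->
  (forall x, S x -> `|h x| <= c) ->
  mu.-integrable D (EFin \o h) /\ \int[mu]_(x in D) h x = \int[mu]_(x in S) h x.
Proof.
move=> c0 mD mS SD Sfin mh h0 hc; split.
  apply/integrableP; split; first exact/measurable_EFinP.
  rewrite (int_restr mu SD); last by move=> x Dx nSx /=; rewrite (h0 x Dx nSx) normr0.
  apply: (@le_lt_trans _ _ (\int[mu]_(x in S) (cst c%:E) x)%E);
    last by rewrite integral_cst // lte_mul_pinfty.
  apply: ge0_le_integral => //.
  all: try (move=> x Sx /=; rewrite lee_fin; exact: hc).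
  all: try (apply: measurableT_comp; [exact: abse_measurable|
    apply/measurable_EFinP; exact: measurable_funS mh]).
rewrite /Rintegral; congr fine; apply: (int_restr mu SD) => x Dx nSx.
by rewrite (h0 x Dx nSx).
Qed.

Lemma nnint d (T : measurableType d) (R : realType) (mu : {measure set T -> \bar R})
  (D : set T) (h : T -> R) : measurable_fun D h -> (forall x, D x -> 0 <= h x) ->
  (\int[mu]_(x in D) (h x)%:E < +oo)%E -> mu.-integrable D (EFin \o h).
Proof.
move=> mh h0 hfin; apply/integrableP; split; first exact/measurable_EFinP.
rewrite (eq_integral (fun x => (h x)%:E)) // => x /[!inE] Dx /=.
by rewrite ger0_norm // h0.
Qed.

Lemma int_fine {d} {T : measurableType d} {R : realType} {mu : {measure set T -> \bar R}}
  {D : set T} {h : T -> R} : measurable D -> mu.-integrable D (EFin \o h) ->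
  (\int[mu]_(x in D) (h x)%:E)%E = (\int[mu]_(x in D) h x)%:E.
Proof. by move=> mD ih; rewrite /Rintegral fineK // (integrable_fin_num mD ih). Qed.

Lemma abs0_meas (R : realType) : measurable_fun [set: R] (@abs0 R).
Proof.
rewrite (_ : abs0 = (\1_(~` [set 0%R]) : R -> R)).
  exact: measurable_indic (measurableC (measurable_set1 0%R)).
apply/funext => t; rewrite /abs0 indicE in_setC in_set1.
by case: eqP.
Qed.

Lemma l0_int (R : realType) (n : nat) (mu : {measure set (n.-tuple R) -> \bar R})
  (Om : set (n.-tuple R)) (w : n.-tuple R -> R) : measurable Om -> (mu Om < +oo)%E -> measurable_fun Om w ->
  mu.-integrable Om (EFin \o (fun x => abs0 (w x))) /\
  l0norm mu Om w = (\int[mu]_(x in Om) abs0 (w x))%:E.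
Proof.
move=> mOm Omfin mw.
have mA : measurable (Om `&` w @^-1` (~` [set 0%R])).
  exact: mw mOm _ (measurableC (measurable_set1 0%R)).
have ma : measurable_fun Om (fun x => abs0 (w x)).
  exact: measurableT_comp (abs0_meas R) mw.
have ia : mu.-integrable Om (EFin \o (fun x => abs0 (w x))).
  apply: (@bint _ _ _ mu _ _ 1) => // x _; rewrite /abs0; case: eqP => _.
    by rewrite normr0.
  by rewrite normr1.
split => //; rewrite -int_fine //.
rewrite /l0norm (_ : [set x | Om x /\ w x != 0%R] = Om `&` w @^-1` (~` [set 0%R])); last first.
  by apply/seteqP; split => x /= [Ox wx]; split => //; apply/eqP.
set A := Om `&` _.
have -> : mu A = mu (A `&` Om) by rewrite setIidl //; exact: subIsetl.
rewrite -integral_indic //.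
apply: eq_integral => x /[!inE] Ox; rewrite indicE /abs0.
case: eqP => [wx|w0] /=.
  by rewrite memNset // => -[_ H]; exact: H.
by rewrite mem_set.
Qed.

Lemma core (R : realType) (n : nat) (mu : {measure set (n.+1.-tuple R) -> \bar R})
  (mu_leb : is_lebesgue_measure mu) (Om : set (n.+1.-tuple R))
  (Om_bdd : bounded_Rn Om) (Om_meas : measurable Om)
  (alpha beta : R) (alpha_ge0 : 0 <= alpha) (beta_ge0 : 0 <= beta) (b : \bar R)
  (f : (n.+1.-tuple R -> R) -> R) (G : n.+1.-tuple R -> R) (mG : measurable_fun Om G)
  (ubar : n.+1.-tuple R -> R) (ubar_ad : Uad mu Om b ubar) (p : R) (p_ge1 : 1 <= p)
  (ubar_loc : exists2 r : R, 0 < r & forall u, Uad mu Om b u ->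
      (LpnormOm mu Om p (fun x => (u x - ubar x)%R) < r%:E)%E ->
      ((f ubar)%:E + gfun mu Om alpha beta ubar <= (f u)%:E + gfun mu Om alpha beta u)%E)
  (f_exp : forall eps : R, 0 < eps -> exists2 delta : R, 0 < delta &
      forall u, Uad mu Om b u -> (LpnormOm mu Om 1 (fun x => (u x - ubar x)%R) < delta%:E)%E ->
        (`| (f u - f ubar)%:E
             - \int[mu]_(x in Om) (G x * (u x - ubar x))%R%:E |
           <= eps%:E * LpnormOm mu Om 1 (fun x => (u x - ubar x)%R))%E)
  (v : R) (hv : (`|v|%:E <= b)%E) (dlt : R) (dlt0 : 0 < dlt) (K : R) :
  let phi := fun x => G x * (v - ubar x) + alpha / 2 * (v ^+ 2 - ubar x ^+ 2)
                      + beta * (abs0 v - abs0 (ubar x)) in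
  measurable [set x | Om x /\ `|ubar x| <= K /\ `|G x| <= K /\ phi x <= - dlt] /\
  mu [set x | Om x /\ `|ubar x| <= K /\ `|G x| <= K /\ phi x <= - dlt] = 0%E.
Proof.
move=> phi.
set E := [set x | _].
have mub : measurable_fun Om ubar by case: ubar_ad => [[]].
have mphi : measurable_fun Om phi.
  apply: measurable_funD; first apply: measurable_funD.
  - by apply: measurable_funM => //; apply: measurable_funB.
  - apply: measurable_funM => //; apply: measurable_funB => //.
    exact: measurable_funX.
  - apply: measurable_funM => //; apply: measurable_funB => //.
    exact: measurableT_comp (abs0_meas R) mub.
have mE : measurable E.
  have -> : E = (Om `&` (fun x => `|ubar x|) @^-1` `]-oo, K]) `&`
     ((Om `&` (fun x => `|G x|) @^-1` `]-oo, K]) `&` (Om `&` phi @^-1` `]-oo, - dlt])).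
    apply/seteqP; split => x /=; rewrite !in_itv /=.
      by move=> [Ox [h1 [h2 h3]]]; rewrite h1 h2 h3.
    by move=> [[Ox h1] [[_ h2] [_ h3]]].
  have m1 : measurable_fun Om (fun x => `|ubar x|) := measurableT_comp (@normr_measurable _ setT) mub.
  have m2 : measurable_fun Om (fun x => `|G x|) := measurableT_comp (@normr_measurable _ setT) mG.
  apply: measurableI; first exact: m1 Om_meas _ (measurable_itv _).
  apply: measurableI; first exact: m2 Om_meas _ (measurable_itv _).
  exact: mphi Om_meas _ (measurable_itv _).
split => //.
apply/eqP; rewrite eq_le measure_ge0 andbT leNgt; apply/negP => Epos.
have EOm : E `<=` Om by move=> x [].
have Omfin := @Om_fin _ _ mu mu_leb Om Om_bdd Om_meas.
have [r r0 Hloc] := ubar_loc.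
pose C := `|v| + `|K| + 1.
have C0 : 0 < C by rewrite /C ltr_pwDr // addr_ge0.
have bndE x : E x -> [/\ `|v - ubar x| <= C, `|G x| <= C & phi x <= - dlt].
  move=> [Ox [h1 [h2 h3]]]; split => //.
  - apply: le_trans (ler_normB _ _) _; rewrite /C -addrA lerD2l.
    apply: le_trans (ler_wpDr _ _) => //; exact: le_trans h1 (ler_norm _).
  - apply: le_trans h2 _; apply: le_trans (ler_norm K) _.
    by rewrite /C -addrA addrC -addrA lerDl addr_ge0.
pose eps := dlt / (2 * C).
have eps0 : 0 < eps by rewrite divr_gt0 // mulr_gt0.
have epsC : eps * C = dlt / 2.
  by rewrite /eps invfM mulrA -mulrA mulVf ?mulr1 ?gt_eqF // mulrAC.
have [dl dl0 Hf] := f_exp eps eps0.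
have p0 : 0 < p by apply: lt_le_trans p_ge1.
pose t := Num.min (dl / C) (r `^ p / C `^ p).
have t0 : 0 < t.
  by rewrite /t lt_min !divr_gt0 // ?powR_gt0.
have [S [mS SE Spos St]] := @nonatomic _ _ mu mu_leb Om Om_bdd E mE EOm Epos t t0.
have SOm : S `<=` Om by move=> x /SE /EOm.
have Sfin : (mu S < +oo)%E by apply: lt_trans St (ltry _).
pose s := fine (mu S).
have muS : mu S = s%:E by rewrite fineK // ge0_fin_numE.
have s0 : 0 < s by rewrite -lte_fin -muS.
have st : s < t by rewrite -lte_fin -muS.
pose u x := ubar x + (v - ubar x) * \1_S x.
have uS x : S x -> u x = v.
  by move=> Sx; rewrite /u indicE mem_set // mulr1 addrC subrK.
have unS x : ~ S x -> u x = ubar x.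
  by move=> nSx; rewrite /u indicE memNset // mulr0 addr0.
have mu_ : measurable_fun Om u.
  rewrite /u; apply: measurable_funD => //; apply: measurable_funM.
    by apply: measurable_funB.
  exact: measurable_indic.
have mu2 : measurable_fun Om (fun x => u x ^+ 2) by exact: measurable_funX.
have mub2 : measurable_fun Om (fun x => ubar x ^+ 2) by exact: measurable_funX.
have ub2fin : (\int[mu]_(x in Om) ((ubar x) ^+ 2)%:E < +oo)%E by case: ubar_ad => [[]].
have u2fin : (\int[mu]_(x in Om) ((u x) ^+ 2)%:E < +oo)%E.
  apply: (@le_lt_trans _ _ (\int[mu]_(x in Om) ((ubar x ^+ 2)%:E + (cst (v ^+ 2)%:E) x))%E).
    apply: ge0_le_integral => //.
    - by move=> x _; rewrite lee_fin sqr_ge0.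
    - exact/measurable_EFinP.
    - by apply: emeasurable_funD => //; exact/measurable_EFinP.
    - move=> x Ox /=; rewrite -EFinD lee_fin.
      case: (pselect (S x)) => Sx; first by rewrite uS // lerDr sqr_ge0.
      by rewrite unS // lerDl sqr_ge0.
  rewrite ge0_integralD //.
  - rewrite integral_cst //; apply: lte_add_pinfty => //.
    by rewrite lte_mul_pinfty // lee_fin sqr_ge0.
  - by move=> x _; rewrite lee_fin sqr_ge0.
  - exact/measurable_EFinP.
  - by move=> x _; rewrite /= lee_fin sqr_ge0.
have Uadu : Uad mu Om b u.
  split; first by split.
  case: ubar_ad => _; apply: filterS => x Hx Ox.
  case: (pselect (S x)) => Sx; first by rewrite uS.
  by rewrite unS //; exact: Hx.
have mvub : measurable_fun S (fun x => `|v - ubar x|).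
  apply: measurableT_comp (@normr_measurable _ setT) _.
  by apply: measurable_funB => //; exact: measurable_funS Om_meas SOm mub.
have L1b : (LpnormOm mu Om 1 (fun x => (u x - ubar x)%R) <= (C * s)%:E)%E.
  rewrite /LpnormOm Lnorm1 (int_restr mu (subsetT S)); last first.
    move=> x _ nSx; case: asboolP => Ox; last by rewrite abse0.
    by rewrite unS // subrr abse0.
  rewrite (eq_integral (fun x => `|v - ubar x|%:E)); last first.
    by move=> x /[!inE] Sx; rewrite (asboolT (SOm x Sx)) /= uS.
  apply: (@le_trans _ _ (\int[mu]_(x in S) (cst C%:E) x)%E); last first.
    by rewrite integral_cst // muS -EFinM.
  apply: ge0_le_integral => //; first exact/measurable_EFinP.
  by move=> x Sx; rewrite lee_fin; case: (bndE x (SE x Sx)).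
have tC1 : t <= dl / C by rewrite /t ge_min lexx.
have tC2 : t <= r `^ p / C `^ p by rewrite /t ge_min lexx orbT.
have Cp0 : 0 < C `^ p by rewrite powR_gt0.
have Lpb : (LpnormOm mu Om p (fun x => (u x - ubar x)%R) < r%:E)%E.
  rewrite ltNge; apply/negP => rN.
  have p0' : p != 0 by rewrite gt_eqF.
  have i1 : r%:E \in `[0%E, +oo%E] by rewrite in_itv /= lee_fin (ltW r0) leey.
  have i2 : LpnormOm mu Om p (fun x => (u x - ubar x)%R) \in `[0%E, +oo%E].
    by rewrite in_itv /= Lnorm_ge0 leey.
  have := @gt0_ler_poweR _ p (ltW p0) _ _ i1 i2 rN.
  rewrite /LpnormOm poweR_Lnorm // poweR_EFin.
  rewrite (int_restr mu (subsetT S)); last first.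
    move=> x _ nSx; case: asboolP => Ox; last by rewrite abse0 poweR0r.
    by rewrite unS // subrr abse0 poweR0r.
  rewrite (eq_integral (fun x => (`|v - ubar x| `^ p)%:E)); last first.
    by move=> x /[!inE] Sx; rewrite (asboolT (SOm x Sx)) /= uS.
  move=> H0.
  have H : ((r `^ p)%:E <= \int[mu]_(x in S) (`|v - ubar x| `^ p)%:E)%E := H0.
  have H2 : (\int[mu]_(x in S) (`|v - ubar x| `^ p)%:E <= (C `^ p * s)%:E)%E.
    apply: (@le_trans _ _ (\int[mu]_(x in S) (cst (C `^ p)%:E) x)%E); last first.
      by rewrite integral_cst // muS -EFinM.
    have mpw : measurable_fun S (fun x => `|v - ubar x| `^ p).
      exact: measurableT_comp (measurable_powR p) mvub.
    apply: ge0_le_integral => //.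
    all: try (by move=> x _; rewrite lee_fin powR_ge0).
    all: try (by apply/measurable_EFinP).
    move=> x Sx; rewrite lee_fin.
    have h1 : `|v - ubar x| \in Num.nneg by rewrite nnegrE normr_ge0.
    have h2 : C \in Num.nneg by rewrite nnegrE ltW.
    have h3 : `|v - ubar x| <= C by case: (bndE x (SE x Sx)).
    exact: (ge0_ler_powR (ltW p0) h1 h2 h3).
  have H3 : C `^ p * s < r `^ p.
    rewrite -ltr_pdivlMl //; apply: lt_le_trans st _.
    by rewrite mulrC.
  have := le_trans H H2; rewrite lee_fin => H4.
  by have := lt_le_trans H3 H4; rewrite ltxx.
have bint2 : forall (h : _ -> R) c, 0 <= c -> measurable_fun S h ->
    (forall x, S x -> `|h x| <= c) -> mu.-integrable S (EFin \o h).
  by move=> h c c0 mh hb; exact: (@bint _ _ _ mu S h c c0 mS Sfin mh hb).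
pose D1 x := G x * (u x - ubar x).
pose D2 x := u x ^+ 2 - ubar x ^+ 2.
pose D3 x := abs0 (u x) - abs0 (ubar x).
have mD1 : measurable_fun Om D1 by apply: measurable_funM => //; apply: measurable_funB.
have mD2 : measurable_fun Om D2 by apply: measurable_funB.
have mau : measurable_fun Om (fun x => abs0 (u x)) := measurableT_comp (abs0_meas R) mu_.
have mab : measurable_fun Om (fun x => abs0 (ubar x)) := measurableT_comp (abs0_meas R) mub.
have mD3 : measurable_fun Om D3 by apply: measurable_funB.
have CC0 : 0 <= C * C by rewrite mulr_ge0 // ltW.
have bD1 x : S x -> `|D1 x| <= C * C.
  move=> Sx; case: (bndE x (SE x Sx)) => h1 h2 _.
  by rewrite /D1 uS // normrM ler_pM.
have bD2 x : S x -> `|D2 x| <= C * C.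
  move=> Sx; case: (bndE x (SE x Sx)) => h1 _ _.
  have h4 : `|v + ubar x| <= C.
    case: (SE x Sx) => _ [hK _].
    apply: le_trans (ler_normD _ _) _; rewrite /C -addrA lerD2l.
    apply: le_trans (ler_wpDr _ _) => //; exact: le_trans hK (ler_norm _).
  by rewrite /D2 uS // subr_sqr normrM ler_pM.
have bD3 x : S x -> `|D3 x| <= 1.
  move=> _; rewrite /D3 /abs0.
  by case: eqP => _; case: eqP => _; rewrite ?subrr ?normr0 ?normr1 ?subr0 ?sub0r ?normrN ?normr1.
have [iD1 eD1] : mu.-integrable Om (EFin \o D1) /\ \int[mu]_(x in Om) D1 x = \int[mu]_(x in S) D1 x.
  apply: (@zint _ _ _ mu Om S D1 (C * C)) => // x Ox nSx.
  by rewrite /D1 unS // subrr mulr0.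
have [iD2 eD2] : mu.-integrable Om (EFin \o D2) /\ \int[mu]_(x in Om) D2 x = \int[mu]_(x in S) D2 x.
  apply: (@zint _ _ _ mu Om S D2 (C * C)) => // x Ox nSx.
  by rewrite /D2 unS // subrr.
have [iD3 eD3] : mu.-integrable Om (EFin \o D3) /\ \int[mu]_(x in Om) D3 x = \int[mu]_(x in S) D3 x.
  apply: (@zint _ _ _ mu Om S D3 1) => // x Ox nSx.
  by rewrite /D3 unS // subrr.
have [iau lu] := @l0_int _ _ mu Om u Om_meas Omfin mu_.
have [iab lb] := @l0_int _ _ mu Om ubar Om_meas Omfin mub.
have iu2 : mu.-integrable Om (EFin \o (fun x => u x ^+ 2)).
  by apply: nnint => // x _; rewrite sqr_ge0.
have ib2 : mu.-integrable Om (EFin \o (fun x => ubar x ^+ 2)).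
  by apply: nnint => // x _; rewrite sqr_ge0.
pose Q1 := \int[mu]_(x in Om) (u x ^+ 2).
pose Q0 := \int[mu]_(x in Om) (ubar x ^+ 2).
pose L1 := \int[mu]_(x in Om) abs0 (u x).
pose L0 := \int[mu]_(x in Om) abs0 (ubar x).
have gu : gfun mu Om alpha beta u = (alpha / 2 * Q1 + beta * L1)%:E.
  by rewrite /gfun lu (int_fine Om_meas iu2) -!EFinM -EFinD.
have gb : gfun mu Om alpha beta ubar = (alpha / 2 * Q0 + beta * L0)%:E.
  by rewrite /gfun lb (int_fine Om_meas ib2) -!EFinM -EFinD.
have eQ : Q1 - Q0 = \int[mu]_(x in S) D2 x by rewrite -eD2 /Q1 /Q0 -RintegralB.
have eL : L1 - L0 = \int[mu]_(x in S) D3 x by rewrite -eD3 /L1 /L0 -RintegralB.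
have Hl := Hloc u Uadu Lpb.
rewrite gu gb -!EFinD lee_fin in Hl.
have L1dl : (LpnormOm mu Om 1 (fun x => (u x - ubar x)%R) < dl%:E)%E.
  apply: le_lt_trans L1b _; rewrite lte_fin.
  rewrite -ltr_pdivlMl //; apply: lt_le_trans st _; by rewrite mulrC.
have Hf2 := Hf u Uadu L1dl.
rewrite (int_fine Om_meas iD1) -EFinB in Hf2.
have Hf3 : `|f u - f ubar - \int[mu]_(x in Om) D1 x| <= eps * (C * s).
  rewrite -lee_fin; apply: le_trans Hf2 _.
  by rewrite [(eps * _)%:E]EFinM lee_pmul2l ?lte_fin.
have mS1 : measurable_fun S D1 := measurable_funS Om_meas SOm mD1.
have mS2 : measurable_fun S D2 := measurable_funS Om_meas SOm mD2.
have mS3 : measurable_fun S D3 := measurable_funS Om_meas SOm mD3.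
have a20 : 0 <= alpha / 2 by rewrite divr_ge0.
have iS1 : mu.-integrable S (EFin \o D1) := bint2 _ _ CC0 mS1 bD1.
have iS2 : mu.-integrable S (EFin \o D2) := bint2 _ _ CC0 mS2 bD2.
have iS3 : mu.-integrable S (EFin \o D3) := bint2 _ _ ler01 mS3 bD3.
have iS2' : mu.-integrable S (EFin \o (fun x => alpha / 2 * D2 x)).
  apply: (bint2 _ (alpha / 2 * (C * C))); first exact: mulr_ge0.
    by apply: measurable_funM.
  by move=> x Sx; rewrite normrM ger0_norm // ler_wpM2l // bD2.
have iS3' : mu.-integrable S (EFin \o (fun x => beta * D3 x)).
  apply: (bint2 _ (beta * 1)); first by rewrite mulr1.
    by apply: measurable_funM.
  by move=> x Sx; rewrite normrM ger0_norm // ler_wpM2l // bD3.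
have iS12 : mu.-integrable S (EFin \o (fun x => D1 x + alpha / 2 * D2 x)).
  apply: (bint2 _ (C * C + alpha / 2 * (C * C))); first by rewrite addr_ge0 // mulr_ge0.
    by apply: measurable_funD => //; apply: measurable_funM.
  move=> x Sx; apply: le_trans (ler_normD _ _) _; apply: lerD; first exact: bD1.
  by rewrite normrM ger0_norm // ler_wpM2l // bD2.
have iS123 : mu.-integrable S (EFin \o (fun x => D1 x + alpha / 2 * D2 x + beta * D3 x)).
  apply: (bint2 _ (C * C + alpha / 2 * (C * C) + beta)); first by rewrite !addr_ge0 // mulr_ge0.
    apply: measurable_funD; last by apply: measurable_funM.
    by apply: measurable_funD => //; apply: measurable_funM.
  move=> x Sx; apply: le_trans (ler_normD _ _) _; apply: lerD.
    apply: le_trans (ler_normD _ _) _; apply: lerD; first exact: bD1.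
    by rewrite normrM ger0_norm // ler_wpM2l // bD2.
  by rewrite normrM ger0_norm // -[X in _ <= X]mulr1 ler_wpM2l // bD3.
have iSc : mu.-integrable S (EFin \o (fun _ => - dlt)).
  apply: (bint2 _ dlt); [exact: ltW | exact: measurable_cst | by move=> x _; rewrite normrN gtr0_norm].
have Hint : \int[mu]_(x in S) (D1 x + alpha / 2 * D2 x + beta * D3 x) <= \int[mu]_(x in S) (- dlt).
  apply: le_Rintegral => // x Sx.
  by rewrite /D1 /D2 /D3 !uS //; case: (bndE x (SE x Sx)).
rewrite Rintegral_cst // -/s (RintegralD mS iS12 iS3') (RintegralD mS iS1 iS2') in Hint.
rewrite (RintegralZl _ mS iS2) (RintegralZl _ mS iS3) in Hint.
rewrite -eQ -eL in Hint.
rewrite eD1 in Hf3.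
have e1 : eps * (C * s) = dlt / 2 * s by rewrite mulrA epsC.
rewrite e1 in Hf3.
move: Hf3; rewrite ler_norml => /andP[_ Hf3].
have ds : 0 < dlt * s by rewrite mulr_gt0.
move: Hl Hint Hf3 ds.
set I1 := \int[mu]_(x in S) D1 x.
move=> Hl Hint Hf3 ds.
have : alpha / 2 * (Q1 - Q0) = alpha / 2 * Q1 - alpha / 2 * Q0 by rewrite mulrBr.
have : beta * (L1 - L0) = beta * L1 - beta * L0 by rewrite mulrBr.
lra.
Qed.

Lemma approx (R : realType) (g a be : R) (a0 : 0 <= a) (v w : R) (b : \bar R)
  (hv : (`|v|%:E <= b)%E)
  (hlt : g * v + a / 2 * v ^+ 2 + be * abs0 v < g * w + a / 2 * w ^+ 2 + be * abs0 w) :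
  exists q : rat, (`|ratr q : R|%:E <= b)%E /\
    g * ratr q + a / 2 * (ratr q) ^+ 2 + be * abs0 (ratr q : R)
      < g * w + a / 2 * w ^+ 2 + be * abs0 w.
Proof.
case: (eqVneq v 0) => [v0|v0].
  exists 0%Q; rewrite rmorph0; split; last by rewrite -v0.
  by apply: le_trans hv; rewrite lee_fin normr0.
set Fw := g * w + _ + _ in hlt *.
pose Dl := Fw - (g * v + a / 2 * v ^+ 2 + be * abs0 v).
have Dl0 : 0 < Dl by rewrite subr_gt0.
pose M := `|g| + a * `|v| + 1.
have M0 : 0 < M by rewrite ltr_pwDr // addr_ge0 // mulr_ge0.
pose e := Dl / M.
have e0 : 0 < e by rewrite divr_gt0.
have [q [qv q0 qe]] : exists q : rat, [/\ `|ratr q : R| <= `|v|, ratr q != 0 :> R & `|ratr q - v| < e].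
  case: (ltrP 0 v) => vp.
    have : Num.max 0 (v - e) < v by rewrite gt_max vp ltrBlDr ltrDl.
    move=> /rat_in_itvoo [q]; rewrite in_itv /= gt_max => /andP[/andP[q0 qe] qv].
    exists q; split.
    - by rewrite !gtr0_norm // ltW.
    - by rewrite gt_eqF.
    - rewrite ltr0_norm ?subr_lt0 //; lra.
  have vn : v < 0 by rewrite lt_neqAle v0 vp.
  have : v < Num.min 0 (v + e) by rewrite lt_min vn ltrDl.
  move=> /rat_in_itvoo [q]; rewrite in_itv /= lt_min => /andP[vq /andP[q0 qe]].
  exists q; split.
  - by rewrite !ltr0_norm // lerN2 ltW.
  - by rewrite lt_eqF.
  - rewrite gtr0_norm ?subr_gt0 //; lra.
exists q; split; first by apply: le_trans hv; rewrite lee_fin.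
set r := ratr q : R in qv q0 qe *.
have ab : abs0 r = abs0 v by rewrite /abs0 (negbTE q0) (negbTE v0).
have diff : (g * r + a / 2 * r ^+ 2 + be * abs0 r) - (g * v + a / 2 * v ^+ 2 + be * abs0 v)
    = (r - v) * (g + a / 2 * (r + v)) by rewrite ab; ring.
have hX : `|g + a / 2 * (r + v)| <= M.
  apply: le_trans (ler_normD _ _) _; rewrite /M -addrA lerD2l.
  rewrite normrM ger0_norm ?divr_ge0 //.
  apply: le_trans (ler_wpDr ler01 _) => //.
  have : `|r + v| <= `|v| + `|v| by apply: le_trans (ler_normD _ _) _; rewrite lerD2r.
  move=> h; apply: le_trans (ler_wpM2l (divr_ge0 a0 (ler0n _ 2)) h) _.
  lra.
have : `|(r - v) * (g + a / 2 * (r + v))| < Dl.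
  rewrite normrM; apply: le_lt_trans (ler_wpM2l (normr_ge0 _) hX) _.
  by rewrite -ltr_pdivlMr // (_ : Dl / M = e).
rewrite -diff /Dl => /ltr_normlP [_]; lra.
Qed.

Theorem mainTheorem1 (R : realType) (n : nat) (n_gt0 : (0 < n)%N)
  (mu : {measure set (n.-tuple R) -> \bar R})
  (mu_leb : is_lebesgue_measure mu)
  (Om : set (n.-tuple R)) (Om_open : open_Rn Om) (Om_bdd : bounded_Rn Om)
  (Om_meas : measurable Om)
  (alpha beta : R) (alpha_ge0 : 0 <= alpha) (beta_gt0 : 0 < beta)
  (b : \bar R) (b_gt0 : (0 < b)%E)
  (f : (n.-tuple R -> R) -> R) (gradf : (n.-tuple R -> R) -> n.-tuple R -> R)
  (f_diff : frechet_L2 mu Om f gradf)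
  (ubar : n.-tuple R -> R) (ubar_inf : inLinf mu Om ubar) (ubar_ad : Uad mu Om b ubar)
  (p : R) (p_ge1 : 1 <= p)
  (ubar_loc : exists2 r : R, 0 < r & forall u, Uad mu Om b u ->
      (LpnormOm mu Om p (fun x => (u x - ubar x)%R) < r%:E)%E ->
      ((f ubar)%:E + gfun mu Om alpha beta ubar <= (f u)%:E + gfun mu Om alpha beta u)%E)
  (f_exp : forall eps : R, 0 < eps -> exists2 delta : R, 0 < delta &
      forall u, Uad mu Om b u -> (LpnormOm mu Om 1 (fun x => (u x - ubar x)%R) < delta%:E)%E ->
        (`| (f u - f ubar)%:E
             - \int[mu]_(x in Om) (gradf ubar x * (u x - ubar x))%R%:E |
           <= eps%:E * LpnormOm mu Om 1 (fun x => (u x - ubar x)%R))%E) :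
  {ae mu, forall x, Om x ->
     is_argmin [set v : R | (`|v|%:E <= b)%E]
       (fun v => gradf ubar x * v + alpha / 2 * v ^+ 2 + beta * abs0 v) (ubar x)}.
Proof.
destruct n as [|n]; first by [].
have mG : measurable_fun Om (gradf ubar) := proj1 (proj1 (f_diff ubar (proj1 ubar_ad))).
pose EE (v dlt K : R) := [set x | Om x /\ `|ubar x| <= K /\ `|gradf ubar x| <= K /\
   gradf ubar x * (v - ubar x) + alpha / 2 * (v ^+ 2 - ubar x ^+ 2)
                      + beta * (abs0 v - abs0 (ubar x)) <= - dlt].
have coreN v dlt K : (`|v|%:E <= b)%E -> 0 < dlt -> mu.-negligible (EE v dlt K).
  move=> hv d0.
  have [mE E0] := @core R n mu mu_leb Om Om_bdd Om_meas alpha beta alpha_ge0 (ltW beta_gt0) b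
     f (gradf ubar) mG ubar ubar_ad p p_ge1 ubar_loc f_exp v hv dlt d0 K.
  exact/(negligibleP _ mE).
pose Em (m : nat) := match (unpickle m : option (rat * nat * nat)) with
  | Some (q, k, K) => if (`|ratr q : R|%:E <= b)%E then EE (ratr q) (k.+1%:R^-1) K%:R else set0
  | None => set0 end.
have nEm m : mu.-negligible (Em m).
  rewrite /Em; case: (unpickle m) => [[[q k] K]|]; last exact: negligible_set0.
  case: ifP => hq; last exact: negligible_set0.
  by apply: coreN => //; rewrite invr_gt0.
have N1 : mu.-negligible (~` [set x | Om x -> (`|ubar x|%:E <= b)%E]).
  by case: ubar_ad.
have Hall := negligibleU N1 (negligible_bigcup nEm).
apply: (negligibleS _ Hall) => x /= Hx.
case: (pselect (Om x -> (`|ubar x|%:E <= b)%E)) => Hb; last by left.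
right.
case: (pselect (Om x)) => Ox; last by exfalso; apply: Hx.
have hb := Hb Ox.
set g := gradf ubar x in Hx *.
set w := ubar x in Hx hb *.
have [v [hv hlt]] : exists v : R, (`|v|%:E <= b)%E /\
    g * v + alpha / 2 * v ^+ 2 + beta * abs0 v < g * w + alpha / 2 * w ^+ 2 + beta * abs0 w.
  apply: contrapT => H; apply: Hx => _; split => // v hv.
  rewrite leNgt; apply/negP => lt; apply: H; exists v; split => //.
have [q [hq hqlt]] := @approx R g alpha beta alpha_ge0 v w b hv hlt.
set Fq := g * ratr q + _ + _ in hqlt.
set Fw := g * w + _ + _ in hqlt.
pose k := Num.Def.archi_bound ((Fw - Fq)^-1).
have hk : (Fw - Fq)^-1 < k%:R.
  by apply: archi_boundP; rewrite invr_ge0 subr_ge0 ltW.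
have hk2 : k.+1%:R^-1 <= Fw - Fq.
  rewrite -[X in _ <= X]invrK lef_pV2 ?posrE ?invr_gt0 ?subr_gt0 //.
  by apply: ltW; apply: lt_le_trans hk _; rewrite ler_nat.
pose K := Num.Def.archi_bound (`|w| + `|g|).
have hK : `|w| + `|g| < K%:R by apply: archi_boundP; rewrite addr_ge0.
exists (pickle (q, k, K)); first by [].
rewrite /Em pickleK hq /EE /=.
have e : gradf ubar x * (ratr q - ubar x) + alpha / 2 * (ratr q ^+ 2 - ubar x ^+ 2) +
  beta * (abs0 (ratr q : R) - abs0 (ubar x)) = Fq - Fw by rewrite /Fq /Fw /g /w; ring.
rewrite e -opprB lerN2.
have h1 : `|ubar x| <= K%:R.
  apply: ltW; apply: le_lt_trans hK; rewrite -/w lerDl; exact: normr_ge0.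
have h2 : `|gradf ubar x| <= K%:R.
  apply: ltW; apply: le_lt_trans hK; rewrite -/g lerDr; exact: normr_ge0.
by [].
Qed.
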